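(* Let $\mathcal C_1$ and $\mathcal C_2$ be $C^2$ closed convex curves that intersect in three or more points. Then there are points $P$ on $\mathcal C_1$ and $Q$ on $\mathcal C_2$ with $\kappa_{\mathcal C_1}(P)=\kappa_{\mathcal C_2}(Q)$.
   Context: Curves are of class $C^2$ with nonvanishing first and second derivative vectors, oriented so that the curvature is positive; $\kappa_{\mathcal C}$ denotes the curvature of the curve $\mathcal C$. *)

(* Defs.v *)
From Stdlib Require Import Reals.
From Coquelicot Require Import Coquelicot.
Open Scope R_scope.

Definition C2fun (f : R -> R) : Prop :=
  forall t, ex_derive f t /\ ex_derive (Derive f) t /\
            continuous (Derive (Derive f)) t.

Definition d1 (f : R -> R) := Derive f.
Definition d2 (f : R -> R) := Derive (Derive f).

Definition curvature (x y : R -> R) (t : R) : R :=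
  (d1 x t * d2 y t - d1 y t * d2 x t) /
  Rpower (d1 x t ^ 2 + d1 y t ^ 2) (3 / 2).

(* (x,y) is a C^2 closed convex curve, parametrized with period L > 0,
   with nonvanishing first and second derivative vectors, oriented so that
   the curvature is positive. "Closed" = L-periodic; "convex" = simple
   (injective on one period) and, for every t, the whole trace lies on one
   side of the tangent line at t. *)
Definition closed_convex_C2_curve (x y : R -> R) (L : R) : Prop :=
  0 < L /\
  C2fun x /\ C2fun y /\
  (forall t, x (t + L) = x t /\ y (t + L) = y t) /\
  (forall s t, 0 <= s < L -> 0 <= t < L -> x s = x t -> y s = y t -> s = t) /\
  (forall t, d1 x t ^ 2 + d1 y t ^ 2 > 0) /\
  (forall t, d2 x t ^ 2 + d2 y t ^ 2 > 0) /\
  (forall t, curvature x y t > 0) /\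
  (forall t,
     (forall s, d1 x t * (y s - y t) - d1 y t * (x s - x t) >= 0) \/
     (forall s, d1 x t * (y s - y t) - d1 y t * (x s - x t) <= 0)).

Definition on_curve (x y : R -> R) (p : R * R) : Prop :=
  exists t, p = (x t, y t).

(* Main.v *)
From Stdlib Require Import Reals Lra Psatz ClassicalEpsilon Classical ZArith.
From Coquelicot Require Import Coquelicot.
Require Import Defs.
Open Scope R_scope.

Lemma cont_mult_test : forall f g t, continuity_pt f t -> continuity_pt g t -> continuity_pt (fun s => f s * g s) t.
Proof. intros. apply continuity_pt_mult; auto. Qed.

Lemma deriv_sign_right (g : R -> R) a l :
  is_derive g a l -> 0 < l -> exists d, 0 < d /\ forall s, a < s < a + d -> g a < g s.
Proof.
  intros H Hl. apply is_derive_Reals in H.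
  destruct (H (l/2) ltac:(lra)) as [del Hd].
  exists del. split; [apply cond_pos|]. intros s Hs.
  assert (Hh : s - a <> 0) by lra.
  assert (Hh2 : Rabs (s - a) < del) by (rewrite Rabs_right; lra).
  specialize (Hd _ Hh Hh2).
  replace (a + (s - a)) with s in Hd by ring.
  apply Rabs_def2 in Hd. destruct Hd as [_ Hd].
  assert (Hq : 0 < (g s - g a) / (s - a)) by lra.
  assert (0 < s - a) by lra.
  apply Rmult_lt_0_compat with (r2 := s - a) in Hq; auto.
  replace ((g s - g a) / (s - a) * (s - a)) with (g s - g a) in Hq by (field; lra). lra.
Qed.

Lemma deriv_sign_left (g : R -> R) a l :
  is_derive g a l -> l < 0 -> exists d, 0 < d /\ forall s, a - d < s < a -> g a < g s.
Proof.
  intros H Hl. apply is_derive_Reals in H.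
  destruct (H (-l/2) ltac:(lra)) as [del Hd].
  exists del. split; [apply cond_pos|]. intros s Hs.
  assert (Hh : s - a <> 0) by lra.
  assert (Hh2 : Rabs (s - a) < del) by (rewrite Rabs_left; lra).
  specialize (Hd _ Hh Hh2).
  replace (a + (s - a)) with s in Hd by ring.
  apply Rabs_def2 in Hd. destruct Hd as [Hd _].
  assert (Hq : (g s - g a) / (s - a) < 0) by lra.
  assert (0 < a - s) by lra.
  apply Rmult_lt_compat_r with (r := a - s) in Hq; auto.
  replace ((g s - g a) / (s - a) * (a - s)) with (-(g s - g a)) in Hq by (field; lra). lra.
Qed.

Lemma deriv_nonzero_notmax (g : R -> R) a l :
  is_derive g a l -> l <> 0 -> exists s, g a < g s.
Proof.
  intros H Hl. destruct (Rlt_or_le 0 l) as [Hp|Hn].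
  - destruct (deriv_sign_right g a l H Hp) as [d [Hd Hs]].
    exists (a + d/2). apply Hs. lra.
  - destruct (deriv_sign_left g a l H ltac:(lra)) as [d [Hd Hs]].
    exists (a - d/2). apply Hs. lra.
Qed.

Lemma mvt_pos (f df : R -> R) a b : a < b ->
  (forall c, is_derive f c (df c)) -> (forall c, a < c < b -> 0 < df c) -> f a < f b.
Proof.
  intros Hab Hd Hp.
  destruct (MVT_cor2 f df a b Hab) as [c [Hc1 Hc2]].
  - intros c _. apply is_derive_Reals. apply Hd.
  - assert (0 < df c * (b - a)) by (apply Rmult_lt_0_compat; [apply Hp; lra| lra]). lra.
Qed.

Lemma increase_after (f df u k : R -> R) (du : R) a :
  (forall c, is_derive f c (df c)) ->
  (forall c, df c = k c * u c) -> (forall c, 0 < k c) ->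
  is_derive u a du -> 0 < du -> u a = 0 -> exists s, f a < f s.
Proof.
  intros Hf Hdf Hk Hu Hdu Hua.
  destruct (deriv_sign_right u a du Hu Hdu) as [d [Hd Hs]].
  exists (a + d/2). apply (mvt_pos f df); auto; try lra.
  intros c Hc. rewrite Hdf. apply Rmult_lt_0_compat; auto.
  specialize (Hs c ltac:(lra)). lra.
Qed.

Lemma increase_after_neg (f df u k : R -> R) (du : R) a :
  (forall c, is_derive f c (df c)) ->
  (forall c, df c = k c * u c) -> (forall c, k c < 0) ->
  is_derive u a du -> du < 0 -> u a = 0 -> exists s, f a < f s.
Proof.
  intros Hf Hdf Hk Hu Hdu Hua.
  assert (Hu' := is_derive_opp _ _ _ Hu).
  destruct (deriv_sign_right _ a _ Hu') as [d [Hd Hs]].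
  { change (0 < - du). lra. }
  exists (a + d/2). apply (mvt_pos f df); auto; try lra.
  intros c Hc. rewrite Hdf. specialize (Hs c ltac:(lra)). change (- u a < - u c) in Hs.
  specialize (Hk c). nra.
Qed.
Lemma abs_bounds x b : Rabs x <= b -> - b <= x <= b.
Proof. intros H. pose proof (Rle_abs x). pose proof (Rle_abs (- x)). rewrite Rabs_Ropp in H1. lra. Qed.

Lemma cont_absdiff f s : continuity_pt f s -> continuity_pt (fun s' => Rabs (f s' - f s)) s.
Proof.
  intros H. apply (continuity_pt_comp (fun s' => f s' - f s) Rabs); [|apply Rcontinuity_abs].
  apply continuity_pt_minus; auto. apply continuity_pt_const. intros u v; reflexivity.
Qed.

Definition periodic (L : R) (f : R -> R) := forall t, f (t + L) = f t.

Lemma per_nat L f : periodic L f -> forall (n : nat) t, f (t + INR n * L) = f t /\ f (t - INR n * L) = f t.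
Proof.
  intros Hp n. induction n as [|n IH]; intros t.
  - simpl. split; f_equal; ring.
  - rewrite S_INR. split.
    + replace (t + (INR n + 1) * L) with ((t + INR n * L) + L) by ring.
      rewrite Hp. apply IH.
    + rewrite <- (Hp (t - (INR n + 1) * L)).
      replace (t - (INR n + 1) * L + L) with (t - INR n * L) by ring.
      apply IH.
Qed.

Lemma per_Z L f : periodic L f -> forall (z : Z) t, f (t + IZR z * L) = f t.
Proof.
  intros Hp z t. destruct z as [|p|p].
  - simpl. f_equal; ring.
  - rewrite <- positive_nat_Z, <- INR_IZR_INZ. apply per_nat; auto.
  - rewrite IZR_NEG, <- positive_nat_Z, <- INR_IZR_INZ.
    replace (t + - INR (Pos.to_nat p) * L) with (t - INR (Pos.to_nat p) * L) by ring.
    apply per_nat; auto.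
Qed.

Lemma reduce L t : 0 < L -> exists z : Z, 0 <= t + IZR z * L <= L.
Proof.
  intros HL. destruct (archimed (t / L)) as [H1 H2].
  exists (1 - up (t / L))%Z. rewrite minus_IZR.
  assert (Hq : t = (t / L) * L) by (field; lra).
  split.
  - rewrite Hq at 1. nra.
  - rewrite Hq at 1. nra.
Qed.

Lemma per_Derive L f : (forall t, ex_derive f t) -> periodic L f -> periodic L (Derive f).
Proof.
  intros Hd Hp t.
  assert (H : is_derive (fun s => f (s + L)) t (Derive f (t + L))).
  { assert (H1 : is_derive (fun s => s + L) t 1).
    { auto_derive; auto; ring. }
    assert (H2 := is_derive_comp f (fun s => s + L) t _ _ (Derive_correct _ _ (Hd (t+L))) H1).
    simpl in H2. rewrite Rmult_1_l in H2. exact H2. }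
  symmetry. apply is_derive_unique.
  apply (is_derive_ext (fun s => f (s + L))); auto.
Qed.

Lemma cont_bound L f : 0 < L -> periodic L f -> (forall t, continuity_pt f t) ->
  exists B, forall t, Rabs (f t) <= B.
Proof.
  intros HL Hp Hc.
  destruct (continuity_ab_maj (fun t => Rabs (f t)) 0 L ltac:(lra)) as [M [HM _]].
  { intros c _. apply (continuity_pt_comp f Rabs); [auto | apply Rcontinuity_abs]. }
  exists (Rabs (f M)). intros t. destruct (reduce L t HL) as [z Hz].
  rewrite <- (per_Z L f Hp z t). apply HM. auto.
Qed.

Section TorusMax.
Variables (L : R) (A d a1 c1 a2 c2 : R -> R).
Hypothesis HL : 0 < L.
Hypotheses (cA : forall t, continuity_pt A t) (cd : forall t, continuity_pt d t)
  (ca1 : forall t, continuity_pt a1 t) (cc1 : forall t, continuity_pt c1 t)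
  (ca2 : forall t, continuity_pt a2 t) (cc2 : forall t, continuity_pt c2 t).
Hypotheses (pA : periodic L A) (pd : periodic L d) (pa1 : periodic L a1)
  (pc1 : periodic L c1) (pa2 : periodic L a2) (pc2 : periodic L c2).

Let G s t := A t + d s + a1 t * c1 s + a2 t * c2 s.

Lemma torus_max : exists s0 t0, forall s t, G s t <= G s0 t0.
Proof.
  destruct (cont_bound L a1 HL pa1 ca1) as [B1 HB1].
  destruct (cont_bound L a2 HL pa2 ca2) as [B2 HB2].
  set (B := Rmax (Rmax B1 B2) 0).
  assert (HB1' : forall t, Rabs (a1 t) <= B).
  { intros t. unfold B. specialize (HB1 t). repeat (apply Rmax_Rle; left); auto. }
  assert (HB2' : forall t, Rabs (a2 t) <= B).
  { intros t. unfold B. specialize (HB2 t). apply Rmax_Rle; left; apply Rmax_Rle; right; auto. }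
  assert (HB0 : 0 <= B) by (unfold B; apply Rmax_Rle; right; lra).
  assert (Hex : forall s, exists t, forall t', G s t' <= G s t).
  { intros s.
    destruct (continuity_ab_maj (fun t => G s t) 0 L ltac:(lra)) as [M [HM _]].
    { intros c _. unfold G.
      repeat apply continuity_pt_plus; try apply continuity_pt_mult; auto;
        apply continuity_pt_const; intros u v; reflexivity. }
    exists M. intros t'. destruct (reduce L t' HL) as [z Hz].
    specialize (HM _ Hz). unfold G in *.
    rewrite (per_Z L A pA z t'), (per_Z L a1 pa1 z t'), (per_Z L a2 pa2 z t') in HM. exact HM. }
  set (tm := fun s => proj1_sig (constructive_indefinite_description _ (Hex s))).
  assert (Htm : forall s t, G s t <= G s (tm s)).
  { intros s t. unfold tm. destruct (constructive_indefinite_description _ (Hex s)) as [t0 H0]. simpl. auto. }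
  set (M := fun s => G s (tm s)).
  assert (HMd : forall s s', Rabs (M s' - M s) <= Rabs (d s' - d s) + B * (Rabs (c1 s' - c1 s) + Rabs (c2 s' - c2 s))).
  { intros s s'.
    assert (E : forall t, Rabs (G s' t - G s t) <= Rabs (d s' - d s) + B * (Rabs (c1 s' - c1 s) + Rabs (c2 s' - c2 s))).
    { intros t. unfold G.
      replace (A t + d s' + a1 t * c1 s' + a2 t * c2 s' - (A t + d s + a1 t * c1 s + a2 t * c2 s))
        with ((d s' - d s) + (a1 t * (c1 s' - c1 s) + a2 t * (c2 s' - c2 s))) by ring.
      eapply Rle_trans; [apply Rabs_triang|]. apply Rplus_le_compat_l.
      eapply Rle_trans; [apply Rabs_triang|]. rewrite !Rabs_mult.
      rewrite Rmult_plus_distr_l. apply Rplus_le_compat; apply Rmult_le_compat_r;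
        try apply Rabs_pos; auto. }
    unfold M. apply Rabs_le. split.
    - specialize (E (tm s)). apply abs_bounds in E. destruct E as [E1 E2].
      specialize (Htm s' (tm s)). lra.
    - specialize (E (tm s')). apply abs_bounds in E. destruct E as [E1 E2].
      specialize (Htm s (tm s')). lra. }
  assert (HMc : forall s, continuity_pt M s).
  { intros s.
    set (F := fun s' => Rabs (d s' - d s) + B * (Rabs (c1 s' - c1 s) + Rabs (c2 s' - c2 s))).
    assert (HF : continuity_pt F s).
    { unfold F. apply continuity_pt_plus; [apply cont_absdiff; auto|].
      apply continuity_pt_mult; [apply continuity_pt_const; intros u v; reflexivity|].
      apply continuity_pt_plus; apply cont_absdiff; auto. }
    intros eps Heps. destruct (HF eps Heps) as [alp [Halp Hc]].
    exists alp. split; auto. intros s' Hs'. specialize (Hc s' Hs').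
    simpl in *. unfold R_dist in *.
    assert (HF0 : F s = 0) by (unfold F; rewrite !Rminus_diag, !Rabs_R0; ring).
    rewrite HF0, Rminus_0_r in Hc.
    eapply Rle_lt_trans; [apply HMd|]. eapply Rle_lt_trans; [apply Rle_abs|]. exact Hc. }
  destruct (continuity_ab_maj M 0 L ltac:(lra)) as [s0 [Hs0 _]].
  { intros c _. auto. }
  exists s0, (tm s0). intros s t.
  destruct (reduce L s HL) as [z Hz].
  assert (E : G s t = G (s + IZR z * L) t).
  { unfold G. rewrite (per_Z L d pd z s), (per_Z L c1 pc1 z s), (per_Z L c2 pc2 z s). reflexivity. }
  rewrite E. eapply Rle_trans; [apply Htm|]. apply (Hs0 _ Hz).
Qed.
End TorusMax.
Definition Qf (x y : R -> R) s := Derive x s ^ 2 + Derive y s ^ 2.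
Definition Sp (x y : R -> R) s := sqrt (Qf x y s).
Definition cr (x y : R -> R) s := Derive x s * Derive (Derive y) s - Derive y s * Derive (Derive x) s.
Definition kap x y s := cr x y s * Sp x y s / Qf x y s ^ 2.
Definition Nx x y s := - Derive y s * Sp x y s / Qf x y s.
Definition Ny x y s := Derive x s * Sp x y s / Qf x y s.

Ltac clean_eta :=
  repeat match goal with
  | |- context [fun x0 : R => ?f x0] => change (fun x0 : R => f x0) with f
  end.

Section Curve.
Variables (x y : R -> R).
Hypothesis Hcx : C2fun x.
Hypothesis Hcy : C2fun y.
Hypothesis Hreg : forall t, d1 x t ^ 2 + d1 y t ^ 2 > 0.

Lemma dx t : is_derive x t (Derive x t).
Proof. apply Derive_correct. apply Hcx. Qed.
Lemma dy t : is_derive y t (Derive y t).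
Proof. apply Derive_correct. apply Hcy. Qed.
Lemma ddx t : is_derive (Derive x) t (Derive (Derive x) t).
Proof. apply Derive_correct. apply Hcx. Qed.
Lemma ddy t : is_derive (Derive y) t (Derive (Derive y) t).
Proof. apply Derive_correct. apply Hcy. Qed.

Lemma cont_of (f : R -> R) t : ex_derive f t -> continuity_pt f t.
Proof. intros H. apply continuity_pt_filterlim. exact (ex_derive_continuous (K:=R_AbsRing) (V:=R_NormedModule) f t H). Qed.

Lemma cx t : continuity_pt x t. Proof. apply cont_of, Hcx. Qed.
Lemma cy t : continuity_pt y t. Proof. apply cont_of, Hcy. Qed.
Lemma cdx t : continuity_pt (Derive x) t. Proof. apply cont_of, Hcx. Qed.
Lemma cdy t : continuity_pt (Derive y) t. Proof. apply cont_of, Hcy. Qed.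
Lemma cddx t : continuity_pt (Derive (Derive x)) t.
Proof. apply continuity_pt_filterlim. apply Hcx. Qed.
Lemma cddy t : continuity_pt (Derive (Derive y)) t.
Proof. apply continuity_pt_filterlim. apply Hcy. Qed.

Lemma Q_pos t : 0 < Qf x y t.
Proof. apply Hreg. Qed.

Lemma Sp_pos t : 0 < Sp x y t.
Proof. unfold Sp. apply sqrt_lt_R0. apply Q_pos. Qed.

Lemma Sp_sq t : Sp x y t * Sp x y t = Qf x y t.
Proof. unfold Sp. apply sqrt_sqrt. left; apply Q_pos. Qed.

Lemma dQ t : is_derive (Qf x y) t (2 * (Derive x t * Derive (Derive x) t + Derive y t * Derive (Derive y) t)).
Proof.
  unfold Qf. auto_derive.
  - repeat split; try apply Hcx; try apply Hcy.
  - clean_eta. ring.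
Qed.

Lemma dSp t : is_derive (Sp x y) t (Sp x y t * (Derive x t * Derive (Derive x) t + Derive y t * Derive (Derive y) t) / Qf x y t).
Proof.
  unfold Sp. assert (H := dQ t). auto_derive.
  - split; [eexists; eauto|]. split; auto. apply Q_pos.
  - clean_eta. rewrite (is_derive_unique _ _ _ H). fold (Sp x y t).
    rewrite <- (Sp_sq t). field. apply Rgt_not_eq, Sp_pos.
Qed.

Lemma dNx t : is_derive (Nx x y) t (- kap x y t * Derive x t).
Proof.
  unfold Nx. assert (H := dSp t). assert (H2 := dQ t).
  auto_derive.
  - repeat split; try apply Hcy; try (eexists; eauto). apply Rgt_not_eq, Q_pos.
  - clean_eta. rewrite (is_derive_unique _ _ _ H), (is_derive_unique _ _ _ H2).
    unfold kap, cr, Qf. field. apply Rgt_not_eq, Q_pos.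
Qed.

Lemma dNy t : is_derive (Ny x y) t (- kap x y t * Derive y t).
Proof.
  unfold Ny. assert (H := dSp t). assert (H2 := dQ t).
  auto_derive.
  - repeat split; try apply Hcx; try (eexists; eauto). apply Rgt_not_eq, Q_pos.
  - clean_eta. rewrite (is_derive_unique _ _ _ H), (is_derive_unique _ _ _ H2).
    unfold kap, cr, Qf. field. apply Rgt_not_eq, Q_pos.
Qed.


Lemma cQ t : continuity_pt (Qf x y) t.
Proof. apply cont_of. eexists; apply dQ. Qed.
Lemma cSp t : continuity_pt (Sp x y) t.
Proof. apply cont_of. eexists; apply dSp. Qed.
Lemma cNx t : continuity_pt (Nx x y) t.
Proof. apply cont_of. eexists; apply dNx. Qed.
Lemma cNy t : continuity_pt (Ny x y) t.
Proof. apply cont_of. eexists; apply dNy. Qed.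

Lemma ckap t : continuity_pt (kap x y) t.
Proof.
  unfold kap. apply continuity_pt_div.
  - apply continuity_pt_mult; [|apply cSp]. unfold cr.
    apply continuity_pt_minus; apply continuity_pt_mult;
      auto using cdx, cdy, cddx, cddy.
  - apply continuity_pt_mult; [apply cQ|]. apply continuity_pt_mult; [apply cQ|].
    apply continuity_pt_const. intros u v; reflexivity.
  - apply Rgt_not_eq. apply pow_lt. apply Q_pos.
Qed.

Lemma curv_eq t : curvature x y t = kap x y t.
Proof.
  unfold curvature, kap, d1, d2. fold (cr x y t). fold (Qf x y t).
  replace (3/2) with (1 + /2) by field.
  rewrite Rpower_plus, Rpower_1, Rpower_sqrt by apply Q_pos. fold (Sp x y t).
  rewrite <- (Sp_sq t). field. apply Rgt_not_eq, Sp_pos.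
Qed.

Section Convex.
Hypothesis Hk : forall t, curvature x y t > 0.
Hypothesis Hcv : forall t,
     (forall s, d1 x t * (y s - y t) - d1 y t * (x s - x t) >= 0) \/
     (forall s, d1 x t * (y s - y t) - d1 y t * (x s - x t) <= 0).

Lemma cr_pos t : 0 < cr x y t.
Proof.
  assert (H := Hk t). rewrite curv_eq in H. unfold kap in H.
  assert (H1 := Sp_pos t). assert (H2 := Q_pos t).
  assert (0 < cr x y t * Sp x y t).
  { replace (cr x y t * Sp x y t) with (cr x y t * Sp x y t / Qf x y t ^ 2 * Qf x y t ^ 2) by (field; lra).
    apply Rmult_lt_0_compat; auto. apply pow_lt; auto. }
  nra.
Qed.

Lemma conv t s : Derive x t * (y s - y t) - Derive y t * (x s - x t) >= 0.
Proof.
  destruct (Hcv t) as [H|H]; [apply H|].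
  exfalso.
  set (h := fun s => Derive x t * (y s - y t) - Derive y t * (x s - x t)).
  set (h1 := fun s => Derive x t * Derive y s - Derive y t * Derive x s).
  assert (Hh : forall c, is_derive h c (h1 c)).
  { intros c. unfold h, h1. auto_derive.
    - split; [apply Hcy|]. split; [apply Hcx|]. auto.
    - clean_eta. ring. }
  assert (Hh1 : is_derive h1 t (cr x y t)).
  { unfold h1, cr. auto_derive.
    - split; [apply Hcy|]. split; [apply Hcx|]. auto.
    - clean_eta. ring. }
  destruct (increase_after h h1 h1 (fun _ => 1) (cr x y t) t Hh) as [s1 Hs1].
  - intros c; ring.
  - intros; lra.
  - exact Hh1.
  - apply cr_pos.
  - unfold h1; ring.
  - specialize (H s1). unfold h in Hs1. unfold d1 in H.
    replace (Derive x t * (y t - y t) - Derive y t * (x t - x t)) with 0 in Hs1 by ring. lra.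
Qed.

Section Blaschke.
Variable L : R.
Hypothesis HL : 0 < L.
Hypothesis px : periodic L x.
Hypothesis py : periodic L y.

Lemma pdx : periodic L (Derive x).
Proof. apply per_Derive; auto. apply Hcx. Qed.
Lemma pdy : periodic L (Derive y).
Proof. apply per_Derive; auto. apply Hcy. Qed.
Lemma pddx : periodic L (Derive (Derive x)).
Proof. apply per_Derive; [apply Hcx| apply pdx]. Qed.
Lemma pddy : periodic L (Derive (Derive y)).
Proof. apply per_Derive; [apply Hcy| apply pdy]. Qed.
Lemma pQ : periodic L (Qf x y).
Proof. intros t. unfold Qf. rewrite pdx, pdy. auto. Qed.
Lemma pSp : periodic L (Sp x y).
Proof. intros t. unfold Sp. rewrite pQ. auto. Qed.
Lemma pNx : periodic L (Nx x y).
Proof. intros t. unfold Nx. rewrite pdy, pSp, pQ. auto. Qed.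
Lemma pNy : periodic L (Ny x y).
Proof. intros t. unfold Ny. rewrite pdx, pSp, pQ. auto. Qed.
Lemma pkap : periodic L (kap x y).
Proof. intros t. unfold kap, cr. rewrite pdx, pdy, pddx, pddy, pSp, pQ. auto. Qed.

Lemma N_unit t : Nx x y t ^ 2 + Ny x y t ^ 2 = 1.
Proof.
  unfold Nx, Ny. assert (H := Sp_sq t). assert (H2 := Q_pos t).
  replace ((- Derive y t * Sp x y t / Qf x y t) ^ 2 + (Derive x t * Sp x y t / Qf x y t) ^ 2)
    with ((Derive x t ^2 + Derive y t ^ 2) * (Sp x y t * Sp x y t) / (Qf x y t * Qf x y t)) by (field; lra).
  rewrite H. unfold Qf. field. fold (Qf x y t). lra.
Qed.

Lemma cpt_const (c : R) t : continuity_pt (fun _ => c) t.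
Proof. apply continuity_pt_const. intros u v; reflexivity. Qed.

Lemma kap_extremes : exists a b, forall t, kap x y a <= kap x y t /\ kap x y t <= kap x y b.
Proof.
  destruct (continuity_ab_min (kap x y) 0 L ltac:(lra)) as [a [Ha _]].
  { intros c _. apply ckap. }
  destruct (continuity_ab_maj (kap x y) 0 L ltac:(lra)) as [b [Hb _]].
  { intros c _. apply ckap. }
  exists a, b. intros t. destruct (reduce L t HL) as [z Hz].
  rewrite <- (per_Z L (kap x y) pkap z t). split; [apply Ha|apply Hb]; auto.
Qed.

Section Inner.
Variable r : R.
Hypothesis Hr : 0 < r.
Hypothesis Hkr : forall t, kap x y t > 1 / r.

Lemma blaschke_in s t :
  Nx x y s * (x t - x s) + Ny x y s * (y t - y s) >= ((x t - x s) ^ 2 + (y t - y s) ^ 2) / (2 * r).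
Proof.
  apply Rnot_lt_ge. intros Hviol.
  set (ecx := fun s => x s + r * Nx x y s).
  set (ecy := fun s => y s + r * Ny x y s).
  set (G := fun s t => (x t - ecx s) ^ 2 + (y t - ecy s) ^ 2).
  assert (HG1 : G s t > r ^ 2).
  { unfold G, ecx, ecy. assert (HN := N_unit s).
    replace ((x t - (x s + r * Nx x y s)) ^ 2 + (y t - (y s + r * Ny x y s)) ^ 2)
      with (((x t - x s) ^ 2 + (y t - y s) ^ 2) - 2 * r * (Nx x y s * (x t - x s) + Ny x y s * (y t - y s))
            + r ^ 2 * (Nx x y s ^ 2 + Ny x y s ^ 2)) by ring.
    rewrite HN.
    assert (Hm : (Nx x y s * (x t - x s) + Ny x y s * (y t - y s)) * (2 * r) < ((x t - x s) ^ 2 + (y t - y s) ^ 2)).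
    { apply Rmult_lt_reg_r with (/ (2 * r)). apply Rinv_0_lt_compat; lra.
      rewrite Rmult_assoc, Rinv_r by lra. lra. }
    lra. }
  assert (Hcecx : forall u, continuity_pt ecx u).
  { intros u. unfold ecx. apply continuity_pt_plus; [apply cx|apply continuity_pt_mult; [apply cpt_const|apply cNx]]. }
  assert (Hcecy : forall u, continuity_pt ecy u).
  { intros u. unfold ecy. apply continuity_pt_plus; [apply cy|apply continuity_pt_mult; [apply cpt_const|apply cNy]]. }
  assert (Hpecx : periodic L ecx) by (intros u; unfold ecx; rewrite px, pNx; reflexivity).
  assert (Hpecy : periodic L ecy) by (intros u; unfold ecy; rewrite py, pNy; reflexivity).
  destruct (torus_max L (fun t => x t * x t + y t * y t) (fun s => ecx s * ecx s + ecy s * ecy s)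
              x (fun s => -2 * ecx s) y (fun s => -2 * ecy s) HL) as [s0 [t0 Hmax]].
  all: try (intros u; apply continuity_pt_plus; apply continuity_pt_mult; auto using cx, cy; fail).
  all: try (intros u; apply continuity_pt_mult; auto using cpt_const; fail).
  all: try (intros u; rewrite ?px, ?py, ?Hpecx, ?Hpecy; reflexivity).
  all: auto using cx, cy.
  assert (HGe : forall s t, G s t = x t * x t + y t * y t + (ecx s * ecx s + ecy s * ecy s) + x t * (-2 * ecx s) + y t * (-2 * ecy s)).
  { intros; unfold G; ring. }
  assert (Hmax' : forall s t, G s t <= G s0 t0).
  { intros s' t'. rewrite !HGe. apply Hmax. }
  clear Hmax.
  set (u := fun s => Derive x s * (x t0 - x s) + Derive y s * (y t0 - y s)).
  set (phi := fun s => G s t0).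
  set (dphi := fun s => 2 * (r * kap x y s - 1) * u s).
  assert (Hphi : forall c, is_derive phi c (dphi c)).
  { intros c. unfold phi, G, ecx, ecy, dphi, u.
    assert (H1 := dNx c). assert (H2 := dNy c).
    auto_derive.
    - repeat split; try apply Hcx; try apply Hcy; eexists; eauto.
    - clean_eta. rewrite (is_derive_unique _ _ _ H1), (is_derive_unique _ _ _ H2).
      unfold Nx, Ny. field. apply Rgt_not_eq, Q_pos. }
  assert (Hkr' : forall c, 0 < 2 * (r * kap x y c - 1)).
  { intros c. specialize (Hkr c). apply Rmult_lt_compat_l with (r := r) in Hkr; auto.
    replace (r * (1 / r)) with 1 in Hkr by (field; lra). lra. }
  assert (Hu0 : u s0 = 0).
  { destruct (Req_dec (dphi s0) 0) as [E|E].
    - unfold dphi in E. specialize (Hkr' s0).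
      apply Rmult_integral in E. destruct E as [E|E]; [lra|exact E].
    - destruct (deriv_nonzero_notmax phi s0 (dphi s0) (Hphi s0) E) as [s2 Hs2].
      unfold phi in Hs2. specialize (Hmax' s2 t0). lra. }
  set (du := Derive (Derive x) s0 * (x t0 - x s0) + Derive (Derive y) s0 * (y t0 - y s0)
             - (Derive x s0 ^ 2 + Derive y s0 ^ 2)).
  assert (Hu : is_derive u s0 du).
  { unfold u, du. auto_derive.
    - repeat split; try apply Hcx; try apply Hcy.
    - clean_eta. ring. }
  assert (Hdu : 0 < du).
  { assert (HGm := Hmax' s t). assert (HGt : G s0 t0 > r ^ 2) by lra. clear HGm.
    assert (Hc := conv s0 t0).
    assert (HS := Sp_sq s0). assert (HSp := Sp_pos s0). assert (HQp := Q_pos s0).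
    assert (Hcr := cr_pos s0). assert (Hk0 := Hkr s0).
    unfold G, ecx, ecy, Nx, Ny in HGt. unfold u in Hu0. unfold du.
    unfold kap in Hk0. unfold cr in *. unfold Qf in *.
    set (X1 := Derive x s0) in *. set (Y1 := Derive y s0) in *.
    set (X2 := Derive (Derive x) s0) in *. set (Y2 := Derive (Derive y) s0) in *.
    set (D1 := x t0 - x s0) in *. set (D2 := y t0 - y s0) in *.
    set (S := Sp x y s0) in *. set (Q := X1 ^ 2 + Y1 ^ 2) in *.
    set (Qc := X1 * D2 - Y1 * D1).
    assert (EG : (x t0 - (x s0 + r * (- Y1 * S / Q))) ^ 2 + (y t0 - (y s0 + r * (X1 * S / Q))) ^ 2
                 = (Qc * Qc - 2 * r * S * Qc) / Q + r ^ 2).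
    { replace (x t0 - (x s0 + r * (- Y1 * S / Q))) with (D1 + r * Y1 * S / Q) by (unfold D1; field; lra).
      replace (y t0 - (y s0 + r * (X1 * S / Q))) with (D2 - r * X1 * S / Q) by (unfold D2; field; lra).
      assert (HD : (D1 ^ 2 + D2 ^ 2) * Q = Qc * Qc).
      { transitivity (Qc * Qc + (X1 * D1 + Y1 * D2) ^ 2). unfold Qc, Q; ring. rewrite Hu0; ring. }
      replace ((D1 + r * Y1 * S / Q) ^ 2 + (D2 - r * X1 * S / Q) ^ 2)
        with ((D1 ^ 2 + D2 ^ 2) * Q / Q - 2 * r * S * Qc / Q + r ^ 2 * (S * S) * (X1 ^ 2 + Y1 ^ 2) / (Q * Q))
        by (unfold Qc; field; lra).
      fold Q. rewrite HS, HD. field. lra. }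
    assert (Hqc : Qc > 2 * r * S).
    { rewrite EG in HGt.
      assert (E1 : r ^ 2 < (Qc * Qc - 2 * r * S * Qc) / Q + r ^ 2) by lra.
      assert (E2 : 0 < (Qc * Qc - 2 * r * S * Qc) / Q) by lra.
      assert (E3 : 0 < Qc * Qc - 2 * r * S * Qc).
      { replace (Qc * Qc - 2 * r * S * Qc) with ((Qc * Qc - 2 * r * S * Qc) / Q * Q) by (field; lra).
        apply Rmult_lt_0_compat; lra. }
      assert (Hc' : Qc >= 0) by exact Hc.
      nra. }
    assert (E4 : Q * (X2 * D1 + Y2 * D2) = (X1 * D1 + Y1 * D2) * (X1 * X2 + Y1 * Y2) + Qc * (X1 * Y2 - Y1 * X2))
      by (unfold Qc, Q; ring).
    rewrite Hu0, Rmult_0_l, Rplus_0_l in E4.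
    assert (E5 : r * ((X1 * Y2 - Y1 * X2) * S) > Q ^ 2).
    { apply Rmult_lt_compat_l with (r := r * Q ^ 2) in Hk0; [|apply Rmult_lt_0_compat; [lra| apply pow_lt; lra]].
      replace (r * Q ^ 2 * (1 / r)) with (Q ^ 2) in Hk0 by (field; lra).
      replace (r * Q ^ 2 * ((X1 * Y2 - Y1 * X2) * S / Q ^ 2)) with (r * ((X1 * Y2 - Y1 * X2) * S)) in Hk0 by (field; lra).
      lra. }
    assert (E6 : Q * (X2 * D1 + Y2 * D2) > 2 * Q ^ 2).
    { rewrite E4. nra. }
    assert (E7 : X2 * D1 + Y2 * D2 > 2 * Q).
    { apply Rmult_lt_reg_l with Q; lra. }
    lra. }
  destruct (increase_after phi dphi u (fun c => 2 * (r * kap x y c - 1)) du s0 Hphi) as [s2 Hs2].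
  - intros c; reflexivity.
  - exact Hkr'.
  - exact Hu.
  - exact Hdu.
  - exact Hu0.
  - unfold phi in Hs2. specialize (Hmax' s2 t0). lra.
Qed.
End Inner.

Section Outer.
Variable r : R.
Hypothesis Hr : 0 < r.
Hypothesis Hkr : forall t, kap x y t < 1 / r.

Lemma blaschke_out s p :
  r - r * (Nx x y p * Nx x y s + Ny x y p * Ny x y s)
    - (Nx x y p * (x s - x p) + Ny x y p * (y s - y p)) <= 0.
Proof.
  apply Rnot_lt_le. intros Hviol.
  set (K := fun s p => r - r * (Nx x y p * Nx x y s + Ny x y p * Ny x y s)
    - (Nx x y p * (x s - x p) + Ny x y p * (y s - y p))).
  assert (Hc1 : forall u, continuity_pt (fun s => - (r * Nx x y s + x s)) u).
  { intros u. apply continuity_pt_opp. apply continuity_pt_plus; [apply continuity_pt_mult; [apply cpt_const|apply cNx]|apply cx]. }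
  assert (Hc2 : forall u, continuity_pt (fun s => - (r * Ny x y s + y s)) u).
  { intros u. apply continuity_pt_opp. apply continuity_pt_plus; [apply continuity_pt_mult; [apply cpt_const|apply cNy]|apply cy]. }
  assert (HcA : forall u, continuity_pt (fun p => Nx x y p * x p + Ny x y p * y p) u).
  { intros u. apply continuity_pt_plus; apply continuity_pt_mult; auto using cNx, cNy, cx, cy. }
  destruct (torus_max L (fun p => Nx x y p * x p + Ny x y p * y p) (fun _ => r)
              (Nx x y) (fun s => - (r * Nx x y s + x s)) (Ny x y) (fun s => - (r * Ny x y s + y s)) HL)
    as [s0 [p0 Hmax]]; auto using cpt_const, cNx, cNy, pNx, pNy.
  all: try (intros u; reflexivity).
  all: try (intros u; rewrite ?px, ?py, ?pNx, ?pNy; reflexivity).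
  assert (HKe : forall s p, K s p = Nx x y p * x p + Ny x y p * y p + r + Nx x y p * (- (r * Nx x y s + x s))
                                 + Ny x y p * (- (r * Ny x y s + y s))).
  { intros; unfold K; ring. }
  assert (Hmax' : forall s p, K s p <= K s0 p0).
  { intros s' p'. rewrite !HKe. apply Hmax. }
  clear Hmax.
  set (n1 := Nx x y p0). set (n2 := Ny x y p0).
  set (w := fun s => n1 * Derive x s + n2 * Derive y s).
  set (k := fun s => K s p0).
  set (dk := fun s => (r * kap x y s - 1) * w s).
  assert (Hkd : forall c, is_derive k c (dk c)).
  { intros c. unfold k, K, dk, w. fold n1 n2.
    assert (H1 := dNx c). assert (H2 := dNy c).
    auto_derive.
    - repeat split; try apply Hcx; try apply Hcy; eexists; eauto.
    - clean_eta. rewrite (is_derive_unique _ _ _ H1), (is_derive_unique _ _ _ H2). ring. }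
  assert (Hkr' : forall c, r * kap x y c - 1 < 0).
  { intros c. specialize (Hkr c). apply Rmult_lt_compat_l with (r := r) in Hkr; auto.
    replace (r * (1 / r)) with 1 in Hkr by (field; lra). lra. }
  assert (Hw0 : w s0 = 0).
  { destruct (Req_dec (dk s0) 0) as [E|E].
    - unfold dk in E. specialize (Hkr' s0).
      apply Rmult_integral in E. destruct E as [E|E]; [lra|exact E].
    - destruct (deriv_nonzero_notmax k s0 (dk s0) (Hkd s0) E) as [s2 Hs2].
      unfold k in Hs2. specialize (Hmax' s2 p0). lra. }
  assert (HKt : K s0 p0 > 0) by (specialize (Hmax' s p); unfold K at 1 in Hmax'; lra).
  assert (Hn : n1 ^ 2 + n2 ^ 2 = 1) by apply N_unit.
  assert (HC : n1 * (x s0 - x p0) + n2 * (y s0 - y p0) >= 0).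
  { assert (Hc := conv p0 s0). unfold n1, n2, Nx, Ny.
    assert (HSp := Sp_pos p0). assert (HQp := Q_pos p0).
    replace (- Derive y p0 * Sp x y p0 / Qf x y p0 * (x s0 - x p0) + Derive x p0 * Sp x y p0 / Qf x y p0 * (y s0 - y p0))
      with ((Derive x p0 * (y s0 - y p0) - Derive y p0 * (x s0 - x p0)) * (Sp x y p0 / Qf x y p0)) by (field; lra).
    apply Rle_ge. apply Rmult_le_pos; [lra|]. apply Rlt_le, Rdiv_lt_0_compat; lra. }
  unfold w in Hw0.
  set (sig := - n1 * Derive y s0 + n2 * Derive x s0).
  assert (Hsig : sig ^ 2 = Qf x y s0).
  { transitivity ((n1 ^ 2 + n2 ^ 2) * Qf x y s0 - (n1 * Derive x s0 + n2 * Derive y s0) ^ 2).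
    - unfold sig, Qf; ring.
    - rewrite Hw0, Hn. ring. }
  assert (HS := Sp_sq s0). assert (HSp := Sp_pos s0). assert (HQp := Q_pos s0).
  destruct (Rlt_or_le 0 sig) as [Hpos|Hneg].
  - assert (Hse : sig = Sp x y s0) by nra.
    assert (E : n1 * Nx x y s0 + n2 * Ny x y s0 = 1).
    { unfold Nx, Ny. replace (n1 * (- Derive y s0 * Sp x y s0 / Qf x y s0) + n2 * (Derive x s0 * Sp x y s0 / Qf x y s0))
        with (sig * Sp x y s0 / Qf x y s0) by (unfold sig; field; lra).
      rewrite Hse, HS. field. lra. }
    unfold K in HKt. fold n1 n2 in HKt. rewrite E in HKt. lra.
  - assert (Hsn : sig < 0).
    { destruct Hneg as [Hl|He]; auto. rewrite He in Hsig. lra. }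
    set (dw := n1 * Derive (Derive x) s0 + n2 * Derive (Derive y) s0).
    assert (Hwd : is_derive w s0 dw).
    { unfold w, dw. auto_derive.
      - repeat split; try apply Hcx; try apply Hcy.
      - clean_eta. ring. }
    assert (Hdw : dw < 0).
    { assert (E : Qf x y s0 * dw = (n1 * Derive x s0 + n2 * Derive y s0) * (Derive x s0 * Derive (Derive x) s0 + Derive y s0 * Derive (Derive y) s0) + sig * cr x y s0).
      { unfold dw, sig, cr, Qf. ring. }
      rewrite Hw0, Rmult_0_l, Rplus_0_l in E.
      assert (Hcr := cr_pos s0).
      assert (Qf x y s0 * dw < 0) by (rewrite E; nra).
      nra. }
    destruct (increase_after_neg k dk w (fun c => r * kap x y c - 1) dw s0 Hkd) as [s2 Hs2].
    + intros c; reflexivity.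
    + exact Hkr'.
    + exact Hwd.
    + exact Hdw.
    + unfold w; exact Hw0.
    + unfold k in Hs2. specialize (Hmax' s2 p0). lra.
Qed.
End Outer.
End Blaschke.
End Convex.
End Curve.

Lemma alg_lower U V g a b c : 0 < U -> 0 < V -> 2 * g <= U -> 2 * g <= V -> g * g <= U * V ->
  0 <= c -> U * c <= a -> V * c <= b ->
  c * c * U * V * (U + V - 2 * g) <= V * a * a - 2 * g * a * b + U * b * b.
Proof.
  intros HU HV Hg1 Hg2 Hgg Hc Ha Hb.
  set (s := a - U * c). set (t := b - V * c).
  assert (Hs : 0 <= s) by (unfold s; lra). assert (Ht : 0 <= t) by (unfold t; lra).
  replace a with (U * c + s) by (unfold s; ring). replace b with (V * c + t) by (unfold t; ring).
  assert (Hq : 0 <= V * s * s - 2 * g * s * t + U * t * t).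
  { assert (H1 : 0 <= V * (V * s * s - 2 * g * s * t + U * t * t)).
    { replace (V * (V * s * s - 2 * g * s * t + U * t * t)) with ((V * s - g * t) ^ 2 + (U * V - g * g) * (t * t)) by ring.
      apply Rplus_le_le_0_compat; [apply pow2_ge_0|]. apply Rmult_le_pos; nra. }
    nra. }
  assert (H2 : 0 <= c * s * V * (U - g)) by (apply Rmult_le_pos; [apply Rmult_le_pos; [apply Rmult_le_pos|]|]; lra).
  assert (H3 : 0 <= c * t * U * (V - g)) by (apply Rmult_le_pos; [apply Rmult_le_pos; [apply Rmult_le_pos|]|]; lra).
  replace (V * (U * c + s) * (U * c + s) - 2 * g * (U * c + s) * (V * c + t) + U * (V * c + t) * (V * c + t))
    with (c * c * U * V * (U + V - 2 * g) + 2 * (c * s * V * (U - g)) + 2 * (c * t * U * (V - g))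
          + (V * s * s - 2 * g * s * t + U * t * t)) by ring.
  lra.
Qed.

Lemma alg_upper U V g a b c : 0 < U -> 0 < V -> 2 * g <= U -> 2 * g <= V ->
  0 <= c -> 0 <= a -> a <= U * c -> 0 <= b -> b <= V * c ->
  V * a * a - 2 * g * a * b + U * b * b <= c * c * U * V * (U + V - 2 * g).
Proof.
  intros HU HV Hg1 Hg2 Hc Ha1 Ha2 Hb1 Hb2.
  assert (E1 : V * a * a <= V * a * (U * c)) by (apply Rmult_le_compat_l; nra).
  assert (E2 : U * b * b <= U * b * (V * c)) by (apply Rmult_le_compat_l; nra).
  assert (Hco : 0 <= U * V * c - 2 * g * b).
  { destruct (Rle_or_lt 0 g).
    - assert (g * b <= g * (V * c)) by (apply Rmult_le_compat_l; lra). nra.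
    - nra. }
  assert (E3 : a * (U * V * c - 2 * g * b) <= U * c * (U * V * c - 2 * g * b)) by (apply Rmult_le_compat_r; lra).
  assert (E4 : b * (U * V * c - 2 * g * U * c) <= V * c * (U * V * c - 2 * g * U * c)).
  { apply Rmult_le_compat_r; auto.
    replace (U * V * c - 2 * g * U * c) with (U * c * (V - 2 * g)) by ring.
    apply Rmult_le_pos; [apply Rmult_le_pos|]; lra. }
  nra.
Qed.

Lemma alg_final u1 u2 v1 v2 m1 m2 n1 n2 r1 r2 :
  m1 ^ 2 + m2 ^ 2 = 1 -> n1 ^ 2 + n2 ^ 2 = 1 -> 0 < r1 -> r1 < r2 ->
  u1 ^ 2 + u2 ^ 2 <= 2 * r1 * (m1 * u1 + m2 * u2) ->
  v1 ^ 2 + v2 ^ 2 <= 2 * r1 * (m1 * v1 + m2 * v2) ->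
  0 <= n1 * u1 + n2 * u2 -> 2 * r2 * (n1 * u1 + n2 * u2) <= u1 ^ 2 + u2 ^ 2 ->
  0 <= n1 * v1 + n2 * v2 -> 2 * r2 * (n1 * v1 + n2 * v2) <= v1 ^ 2 + v2 ^ 2 ->
  2 * (u1 * v1 + u2 * v2) <= u1 ^ 2 + u2 ^ 2 ->
  2 * (u1 * v1 + u2 * v2) <= v1 ^ 2 + v2 ^ 2 ->
  0 < u1 ^ 2 + u2 ^ 2 -> 0 < v1 ^ 2 + v2 ^ 2 -> 0 < (u1 - v1) ^ 2 + (u2 - v2) ^ 2 -> False.
Proof.
  intros Hm Hn Hr1 Hr12 H1 H2 H3 H4 H5 H6 Hg1 Hg2 HU HV HW.
  assert (Hgg : (u1 * v1 + u2 * v2) * (u1 * v1 + u2 * v2) <= (u1 ^ 2 + u2 ^ 2) * (v1 ^ 2 + v2 ^ 2)).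
  { replace ((u1 ^ 2 + u2 ^ 2) * (v1 ^ 2 + v2 ^ 2)) with ((u1 * v1 + u2 * v2) * (u1 * v1 + u2 * v2) + (u1 * v2 - u2 * v1) ^ 2) by ring.
    assert (H0 := pow2_ge_0 (u1 * v2 - u2 * v1)). lra. }
  assert (Id : forall p1 p2, (v1 ^ 2 + v2 ^ 2) * (p1 * u1 + p2 * u2) * (p1 * u1 + p2 * u2) - 2 * (u1 * v1 + u2 * v2) * (p1 * u1 + p2 * u2) * (p1 * v1 + p2 * v2)
                 + (u1 ^ 2 + u2 ^ 2) * (p1 * v1 + p2 * v2) * (p1 * v1 + p2 * v2) = (u1 * v2 - u2 * v1) ^ 2 * (p1 ^ 2 + p2 ^ 2)).
  { intros. ring. }
  assert (HW' : 0 < (u1 ^ 2 + u2 ^ 2) + (v1 ^ 2 + v2 ^ 2) - 2 * (u1 * v1 + u2 * v2)) by nra.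
  set (U := u1 ^ 2 + u2 ^ 2) in *. set (V := v1 ^ 2 + v2 ^ 2) in *. set (g := u1 * v1 + u2 * v2) in *.
  set (c1 := / (2 * r1)). set (c2 := / (2 * r2)).
  assert (Hc1 : 0 < c1) by (unfold c1; apply Rinv_0_lt_compat; lra).
  assert (Hc2 : 0 < c2) by (unfold c2; apply Rinv_0_lt_compat; lra).
  assert (Hc12 : c2 < c1) by (unfold c1, c2; apply Rinv_lt_contravar; nra).
  assert (L1 := alg_lower U V g (m1 * u1 + m2 * u2) (m1 * v1 + m2 * v2) c1 HU HV Hg1 Hg2 Hgg ltac:(lra)).
  assert (L2 := alg_upper U V g (n1 * u1 + n2 * u2) (n1 * v1 + n2 * v2) c2 HU HV Hg1 Hg2 ltac:(lra)).
  rewrite Id, Hm in L1. rewrite Id, Hn in L2.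
  assert (A1 : U * c1 <= m1 * u1 + m2 * u2).
  { unfold c1. apply Rmult_le_reg_l with (2 * r1); [lra|]. field_simplify; lra. }
  assert (A2 : V * c1 <= m1 * v1 + m2 * v2).
  { unfold c1. apply Rmult_le_reg_l with (2 * r1); [lra|]. field_simplify; lra. }
  assert (A3 : n1 * u1 + n2 * u2 <= U * c2).
  { unfold c2. apply Rmult_le_reg_l with (2 * r2); [lra|]. field_simplify; lra. }
  assert (A4 : n1 * v1 + n2 * v2 <= V * c2).
  { unfold c2. apply Rmult_le_reg_l with (2 * r2); [lra|]. field_simplify; lra. }
  specialize (L1 A1 A2). specialize (L2 H3 A3 H5 A4).
  assert (HP : 0 < U * V * (U + V - 2 * g)) by (apply Rmult_lt_0_compat; [apply Rmult_lt_0_compat|]; lra).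
  assert (c2 * c2 < c1 * c1) by nra.
  nra.
Qed.

Lemma curve_facts x y L : closed_convex_C2_curve x y L ->
  (forall r, 0 < r -> (forall t, kap x y t > 1 / r) -> forall s t,
     Nx x y s * (x t - x s) + Ny x y s * (y t - y s) >= ((x t - x s) ^ 2 + (y t - y s) ^ 2) / (2 * r)) /\
  (forall r, 0 < r -> (forall t, kap x y t < 1 / r) -> forall s p,
     r - r * (Nx x y p * Nx x y s + Ny x y p * Ny x y s)
       - (Nx x y p * (x s - x p) + Ny x y p * (y s - y p)) <= 0) /\
  (forall t s, Derive x t * (y s - y t) - Derive y t * (x s - x t) >= 0) /\
  (forall t, Nx x y t ^ 2 + Ny x y t ^ 2 = 1) /\
  (exists a b, forall t, kap x y a <= kap x y t /\ kap x y t <= kap x y b) /\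
  (forall t, continuity_pt (kap x y) t) /\
  (forall t, curvature x y t = kap x y t) /\
  (forall t, 0 < Sp x y t) /\ (forall t, 0 < Qf x y t).
Proof.
  intros [HL [Hcx [Hcy [Hp [_ [Hreg [_ [Hk Hcv]]]]]]]].
  assert (px : periodic L x) by (intros t; apply Hp).
  assert (py : periodic L y) by (intros t; apply Hp).
  repeat split.
  - intros r Hr Hkr s t. exact (blaschke_in x y Hcx Hcy Hreg Hk Hcv L HL px py r Hr Hkr s t).
  - intros r Hr Hkr s p. exact (blaschke_out x y Hcx Hcy Hreg Hk Hcv L HL px py r Hr Hkr s p).
  - intros t s. exact (conv x y Hcx Hcy Hreg Hk Hcv t s).
  - intros t. exact (N_unit x y Hreg t).
  - exact (kap_extremes x y Hcx Hcy Hreg L HL px py).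
  - intros t. eapply ckap; eauto.
  - intros t. exact (curv_eq x y Hreg t).
  - intros t. apply (Sp_pos x y Hreg).
  - intros t. apply (Q_pos x y Hreg).
Qed.

Lemma out_to_ineq r n1 n2 m1 m2 u1 u2 : 0 < r -> m1 ^ 2 + m2 ^ 2 = 1 -> n1 ^ 2 + n2 ^ 2 = 1 ->
  r - r * (m1 * n1 + m2 * n2) - (m1 * (- u1) + m2 * (- u2)) <= 0 ->
  2 * r * (n1 * u1 + n2 * u2) <= u1 ^ 2 + u2 ^ 2.
Proof.
  intros Hr Hm Hn H.
  set (z1 := r * n1 - u1). set (z2 := r * n2 - u2).
  assert (Hmz : r <= m1 * z1 + m2 * z2) by (unfold z1, z2; nra).
  assert (Hid : (m1 ^ 2 + m2 ^ 2) * (z1 ^ 2 + z2 ^ 2) = (m1 * z1 + m2 * z2) ^ 2 + (m1 * z2 - m2 * z1) ^ 2) by ring.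
  rewrite Hm, Rmult_1_l in Hid.
  assert (Hz : r * r <= z1 ^ 2 + z2 ^ 2).
  { assert (H0 := pow2_ge_0 (m1 * z2 - m2 * z1)).
    assert (r * r <= (m1 * z1 + m2 * z2) ^ 2) by nra. lra. }
  assert (E : z1 ^ 2 + z2 ^ 2 = r * r * (n1 ^ 2 + n2 ^ 2) - 2 * r * (n1 * u1 + n2 * u2) + (u1 ^ 2 + u2 ^ 2))
    by (unfold z1, z2; ring).
  rewrite Hn in E. lra.
Qed.

Lemma vertex x1 y1 L1 x2 y2 L2 r1 r2 aP aQ aR bP bQ bR :
  closed_convex_C2_curve x1 y1 L1 -> closed_convex_C2_curve x2 y2 L2 ->
  0 < r1 -> r1 < r2 -> (forall t, kap x1 y1 t > 1 / r1) -> (forall t, kap x2 y2 t < 1 / r2) ->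
  x2 bP = x1 aP -> y2 bP = y1 aP -> x2 bQ = x1 aQ -> y2 bQ = y1 aQ -> x2 bR = x1 aR -> y2 bR = y1 aR ->
  0 < (x1 aQ - x1 aP) ^ 2 + (y1 aQ - y1 aP) ^ 2 ->
  0 < (x1 aR - x1 aP) ^ 2 + (y1 aR - y1 aP) ^ 2 ->
  0 < ((x1 aQ - x1 aP) - (x1 aR - x1 aP)) ^ 2 + ((y1 aQ - y1 aP) - (y1 aR - y1 aP)) ^ 2 ->
  2 * ((x1 aQ - x1 aP) * (x1 aR - x1 aP) + (y1 aQ - y1 aP) * (y1 aR - y1 aP)) <= (x1 aQ - x1 aP) ^ 2 + (y1 aQ - y1 aP) ^ 2 ->
  2 * ((x1 aQ - x1 aP) * (x1 aR - x1 aP) + (y1 aQ - y1 aP) * (y1 aR - y1 aP)) <= (x1 aR - x1 aP) ^ 2 + (y1 aR - y1 aP) ^ 2 ->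
  False.
Proof.
  intros H1 H2 Hr1 Hr12 Hk1 Hk2 EP1 EP2 EQ1 EQ2 ER1 ER2 HU HV HW Hg1 Hg2.
  destruct (curve_facts _ _ _ H1) as [B1 [_ [_ [N1 _]]]].
  destruct (curve_facts _ _ _ H2) as [_ [B2 [C2 [N2 [_ [_ [_ [Sp2 Q2]]]]]]]].
  assert (Hr2 : 0 < r2) by lra.
  assert (In1 : forall aT, (x1 aT - x1 aP) ^ 2 + (y1 aT - y1 aP) ^ 2 <= 2 * r1 * (Nx x1 y1 aP * (x1 aT - x1 aP) + Ny x1 y1 aP * (y1 aT - y1 aP))).
  { intros aT. specialize (B1 r1 Hr1 Hk1 aP aT).
    apply Rge_le in B1. apply Rmult_le_compat_l with (r := 2 * r1) in B1; [|lra].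
    replace (2 * r1 * (((x1 aT - x1 aP) ^ 2 + (y1 aT - y1 aP) ^ 2) / (2 * r1))) with ((x1 aT - x1 aP) ^ 2 + (y1 aT - y1 aP) ^ 2) in B1 by (field; lra).
    exact B1. }
  assert (Out2 : forall aT bT, x2 bT = x1 aT -> y2 bT = y1 aT ->
             0 <= Nx x2 y2 bP * (x1 aT - x1 aP) + Ny x2 y2 bP * (y1 aT - y1 aP) /\
             2 * r2 * (Nx x2 y2 bP * (x1 aT - x1 aP) + Ny x2 y2 bP * (y1 aT - y1 aP)) <= (x1 aT - x1 aP) ^ 2 + (y1 aT - y1 aP) ^ 2).
  { intros aT bT E1 E2. split.
    - specialize (C2 bP bT). rewrite E1, E2, EP1, EP2 in C2. unfold Nx, Ny.
      assert (HS := Sp2 bP). assert (HQ := Q2 bP).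
      replace (- Derive y2 bP * Sp x2 y2 bP / Qf x2 y2 bP * (x1 aT - x1 aP) + Derive x2 bP * Sp x2 y2 bP / Qf x2 y2 bP * (y1 aT - y1 aP))
        with ((Derive x2 bP * (y1 aT - y1 aP) - Derive y2 bP * (x1 aT - x1 aP)) * (Sp x2 y2 bP / Qf x2 y2 bP)) by (field; lra).
      apply Rmult_le_pos; [lra|]. apply Rlt_le, Rdiv_lt_0_compat; lra.
    - specialize (B2 r2 Hr2 Hk2 bP bT). rewrite E1, E2, EP1, EP2 in B2.
      apply (out_to_ineq r2 _ _ (Nx x2 y2 bT) (Ny x2 y2 bT)); auto.
      replace (- (x1 aT - x1 aP)) with (x1 aP - x1 aT) by ring.
      replace (- (y1 aT - y1 aP)) with (y1 aP - y1 aT) by ring.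
      replace (Nx x2 y2 bT * Nx x2 y2 bP + Ny x2 y2 bT * Ny x2 y2 bP) with (Nx x2 y2 bT * Nx x2 y2 bP + Ny x2 y2 bT * Ny x2 y2 bP) by ring.
      exact B2. }
  destruct (Out2 aQ bQ EQ1 EQ2) as [OQ1 OQ2].
  destruct (Out2 aR bR ER1 ER2) as [OR1 OR2].
  apply (alg_final (x1 aQ - x1 aP) (y1 aQ - y1 aP) (x1 aR - x1 aP) (y1 aR - y1 aP)
           (Nx x1 y1 aP) (Ny x1 y1 aP) (Nx x2 y2 bP) (Ny x2 y2 bP) r1 r2); auto.
Qed.

Lemma pt_ne (a b c d : R) : (a, b) <> (c, d) -> 0 < (c - a) ^ 2 + (d - b) ^ 2.
Proof.
  intros H. destruct (Rle_or_lt ((c - a) ^ 2 + (d - b) ^ 2) 0) as [Hl|Hl]; auto.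
  exfalso. apply H. assert (H1 := pow2_ge_0 (c - a)). assert (H2 := pow2_ge_0 (d - b)).
  assert ((c - a) ^ 2 = 0) by lra. assert ((d - b) ^ 2 = 0) by lra.
  assert (c - a = 0) by (apply Rsqr_0_uniq; rewrite Rsqr_pow2; auto).
  assert (d - b = 0) by (apply Rsqr_0_uniq; rewrite Rsqr_pow2; auto).
  f_equal; lra.
Qed.

Lemma core x1 y1 L1 x2 y2 L2 r1 r2 :
  closed_convex_C2_curve x1 y1 L1 -> closed_convex_C2_curve x2 y2 L2 ->
  0 < r1 -> r1 < r2 -> (forall t, kap x1 y1 t > 1 / r1) -> (forall t, kap x2 y2 t < 1 / r2) ->
  (exists p1 p2 p3 : R * R,
     p1 <> p2 /\ p1 <> p3 /\ p2 <> p3 /\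
     on_curve x1 y1 p1 /\ on_curve x2 y2 p1 /\
     on_curve x1 y1 p2 /\ on_curve x2 y2 p2 /\
     on_curve x1 y1 p3 /\ on_curve x2 y2 p3) -> False.
Proof.
  intros H1 H2 Hr1 Hr12 Hk1 Hk2 [p1 [p2 [p3 [N12 [N13 [N23 [[a1 E1] [[b1 F1] [[a2 E2] [[b2 F2] [[a3 E3] [b3 F3]]]]]]]]]]]].
  rewrite E1 in F1. rewrite E2 in F2. rewrite E3 in F3.
  injection F1 as F1x F1y. injection F2 as F2x F2y. injection F3 as F3x F3y.
  subst p1 p2 p3.
  assert (D12 := pt_ne _ _ _ _ N12). assert (D13 := pt_ne _ _ _ _ N13). assert (D23 := pt_ne _ _ _ _ N23).
  destruct (Rle_or_lt ((x1 a2 - x1 a1) ^ 2 + (y1 a2 - y1 a1) ^ 2) ((x1 a3 - x1 a2) ^ 2 + (y1 a3 - y1 a2) ^ 2)) as [C1|C1];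
  [destruct (Rle_or_lt ((x1 a3 - x1 a1) ^ 2 + (y1 a3 - y1 a1) ^ 2) ((x1 a3 - x1 a2) ^ 2 + (y1 a3 - y1 a2) ^ 2)) as [C2|C2]|
   destruct (Rle_or_lt ((x1 a3 - x1 a1) ^ 2 + (y1 a3 - y1 a1) ^ 2) ((x1 a2 - x1 a1) ^ 2 + (y1 a2 - y1 a1) ^ 2)) as [C2|C2]].
  - apply (vertex x1 y1 L1 x2 y2 L2 r1 r2 a1 a2 a3 b1 b2 b3); auto; nra.
  - apply (vertex x1 y1 L1 x2 y2 L2 r1 r2 a2 a1 a3 b2 b1 b3); auto; nra.
  - apply (vertex x1 y1 L1 x2 y2 L2 r1 r2 a3 a1 a2 b3 b1 b2); auto; nra.
  - apply (vertex x1 y1 L1 x2 y2 L2 r1 r2 a2 a1 a3 b2 b1 b3); auto; nra.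
Qed.

Lemma swap_pts x1 y1 x2 y2 :
  (exists p1 p2 p3 : R * R,
     p1 <> p2 /\ p1 <> p3 /\ p2 <> p3 /\
     on_curve x1 y1 p1 /\ on_curve x2 y2 p1 /\
     on_curve x1 y1 p2 /\ on_curve x2 y2 p2 /\
     on_curve x1 y1 p3 /\ on_curve x2 y2 p3) ->
  (exists p1 p2 p3 : R * R,
     p1 <> p2 /\ p1 <> p3 /\ p2 <> p3 /\
     on_curve x2 y2 p1 /\ on_curve x1 y1 p1 /\
     on_curve x2 y2 p2 /\ on_curve x1 y1 p2 /\
     on_curve x2 y2 p3 /\ on_curve x1 y1 p3).
Proof.
  intros [p1 [p2 [p3 H]]]. exists p1, p2, p3. tauto.
Qed.

Lemma separated x1 y1 L1 x2 y2 L2 a b :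
  closed_convex_C2_curve x1 y1 L1 -> closed_convex_C2_curve x2 y2 L2 ->
  (forall t, kap x1 y1 a <= kap x1 y1 t) -> (forall t, kap x2 y2 t <= kap x2 y2 b) ->
  kap x2 y2 b < kap x1 y1 a ->
  (exists p1 p2 p3 : R * R,
     p1 <> p2 /\ p1 <> p3 /\ p2 <> p3 /\
     on_curve x1 y1 p1 /\ on_curve x2 y2 p1 /\
     on_curve x1 y1 p2 /\ on_curve x2 y2 p2 /\
     on_curve x1 y1 p3 /\ on_curve x2 y2 p3) -> False.
Proof.
  intros H1 H2 Ha Hb Hab Hpts.
  assert (Hpos : 0 < kap x2 y2 b).
  { destruct (curve_facts _ _ _ H2) as [_ [_ [_ [_ [_ [_ [Ce _]]]]]]].
    destruct H2 as [_ [_ [_ [_ [_ [_ [_ [Hk _]]]]]]]]. rewrite <- Ce. apply Hk. }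
  set (q1 := (2 * kap x1 y1 a + kap x2 y2 b) / 3).
  set (q2 := (kap x1 y1 a + 2 * kap x2 y2 b) / 3).
  assert (Hq2 : 0 < q2) by (unfold q2; lra).
  assert (Hq12 : q2 < q1) by (unfold q1, q2; lra).
  apply (core x1 y1 L1 x2 y2 L2 (/ q1) (/ q2)); auto.
  - apply Rinv_0_lt_compat; lra.
  - apply Rinv_lt_contravar; nra.
  - intros t. replace (1 / / q1) with q1 by (field; lra). specialize (Ha t). unfold q1. lra.
  - intros t. replace (1 / / q2) with q2 by (field; lra). specialize (Hb t). unfold q2. lra.
Qed.

Theorem theorem4p6 (x1 y1 x2 y2 : R -> R) (L1 L2 : R) :
  closed_convex_C2_curve x1 y1 L1 ->
  closed_convex_C2_curve x2 y2 L2 ->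
  (exists p1 p2 p3 : R * R,
     p1 <> p2 /\ p1 <> p3 /\ p2 <> p3 /\
     on_curve x1 y1 p1 /\ on_curve x2 y2 p1 /\
     on_curve x1 y1 p2 /\ on_curve x2 y2 p2 /\
     on_curve x1 y1 p3 /\ on_curve x2 y2 p3) ->
  exists t1 t2 : R, curvature x1 y1 t1 = curvature x2 y2 t2.
Proof.
  intros H1 H2 Hpts.
  destruct (curve_facts _ _ _ H1) as [_ [_ [_ [_ [[a1 [b1 E1]] [Ck1 [Ce1 _]]]]]]].
  destruct (curve_facts _ _ _ H2) as [_ [_ [_ [_ [[a2 [b2 E2]] [Ck2 [Ce2 _]]]]]]].
  destruct (Rlt_or_le (kap x2 y2 b2) (kap x1 y1 a1)) as [C1|C1].
  { exfalso. apply (separated x1 y1 L1 x2 y2 L2 a1 b2); auto; intros t; apply E1 || apply E2. }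
  destruct (Rlt_or_le (kap x1 y1 b1) (kap x2 y2 a2)) as [C2|C2].
  { exfalso. apply (separated x2 y2 L2 x1 y1 L1 a2 b1); auto.
    - intros t; apply E2.
    - intros t; apply E1.
    - apply swap_pts; auto. }
  set (c := Rmax (kap x1 y1 a1) (kap x2 y2 a2)).
  assert (Hab1 : kap x1 y1 a1 <= kap x1 y1 b1) by apply (E1 a1).
  assert (Hab2 : kap x2 y2 a2 <= kap x2 y2 b2) by apply (E2 a2).
  assert (Hc1 : kap x1 y1 a1 <= c /\ c <= kap x1 y1 b1).
  { unfold c, Rmax. destruct (Rle_dec _ _); lra. }
  assert (Hc2 : kap x2 y2 a2 <= c /\ c <= kap x2 y2 b2).
  { unfold c, Rmax. destruct (Rle_dec _ _); lra. }
  destruct (IVT_gen (kap x1 y1) a1 b1 c Ck1) as [t1 [_ Ht1]].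
  { unfold Rmin, Rmax. destruct (Rle_dec _ _); lra. }
  destruct (IVT_gen (kap x2 y2) a2 b2 c Ck2) as [t2 [_ Ht2]].
  { unfold Rmin, Rmax. destruct (Rle_dec _ _); lra. }
  exists t1, t2. rewrite Ce1, Ce2, Ht1, Ht2. reflexivity.
Qed.
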